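(* Let $T$ be a complete first-order theory with monster model $\mathfrak C$, and let $p(\bar x)\in S(\emptyset)$ with $\bar x$ of length $<\kappa$. If $p(\bar x)$ is extremely amenable, then the set of realizations of $p$ in $\mathfrak C$ is a single Lascar strong type, and moreover $d_L(\bar\alpha,\bar\beta)\le 2$ for all realizations $\bar\alpha,\bar\beta$ of $p$. In particular, if $T$ is extremely amenable, then Lascar strong types coincide with complete types over $\emptyset$, i.e. the Lascar Galois group $\mathrm{Gal}_L(T)=\mathrm{Aut}(\mathfrak C)/\mathrm{Autf}_L(\mathfrak C)$ is trivial.
   Context: $\mathfrak C$ is $\kappa$-saturated and strongly $\kappa$-homogeneous for a large $\kappa$; ''small'' means of size $<\kappa$. For a type $\pi(\bar x)$ over $\emptyset$, $S_\pi(\mathfrak C)=\{q\in S_{\bar x}(\mathfrak C):\pi\subseteq q\}$. $\pi$ is extremely amenable if some $q\in S_\pi(\mathfrak C)$ is $\mathrm{Aut}(\mathfrak C)$-invariant; $T$ is extremely amenable if every type in $S(\emptyset)$, in any number of variables, is extremely amenable. $\mathrm{Autf}_L(\mathfrak C)$ is the subgroup of $\mathrm{Aut}(\mathfrak C)$ generated by automorphisms fixing pointwise some small elementary submodel; its orbits on tuples are the Lascar strong types ($E_L$-classes). The Lascar distance $d_L(\bar\alpha,\bar\beta)$ is the least $n$ such that there exist $\bar\alpha_0=\bar\alpha,\dots,\bar\alpha_n=\bar\beta$ and small models $M_0,\dots,M_{n-1}$ with $\bar\alpha_i\equiv_{M_i}\bar\alpha_{i+1}$ for $i<n$. *)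

(* Defs.v *)
From Stdlib Require Import List Arith Fin.

Record language := Language {
  funcs : Type; rels : Type;
  farity : funcs -> nat; rarity : rels -> nat }.

Record structure (L : language) := Structure {
  carrier :> Type;
  funI : forall f : funcs L, (Fin.t (@farity L f) -> carrier) -> carrier;
  relI : forall r : rels L, (Fin.t (@rarity L r) -> carrier) -> Prop }.

Inductive term (L : language) (V : Type) : Type :=
| tvar : V -> term L V
| tapp : forall f : funcs L, (Fin.t (@farity L f) -> term L V) -> term L V.

Inductive formula (L : language) : Type -> Type :=
| feq  : forall V, term L V -> term L V -> formula L V
| frel : forall V (r : rels L), (Fin.t (@rarity L r) -> term L V) -> formula L V
| fneg : forall V, formula L V -> formula L V
| fand : forall V, formula L V -> formula L V -> formula L V
| fex  : forall V, formula L (option V) -> formula L V.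

Arguments tvar {L V}.
Arguments tapp {L V}.
Arguments feq {L V}.
Arguments frel {L V}.
Arguments fneg {L V}.
Arguments fand {L V}.
Arguments fex {L V}.

Section Syntax.
Variable L : language.

Fixpoint trename {V W : Type} (f : V -> W) (t : term L V) : term L W :=
  match t with
  | tvar v => tvar (f v)
  | tapp g args => tapp g (fun i => trename f (args i))
  end.

Fixpoint rename {V W : Type} (f : V -> W) (phi : formula L V) : formula L W :=
  match phi in formula _ V0 return (V0 -> W) -> formula L W with
  | feq t1 t2 => fun f => feq (trename f t1) (trename f t2)
  | frel r args => fun f => frel r (fun i => trename f (args i))
  | fneg psi => fun f => fneg (rename f psi)
  | fand psi chi => fun f => fand (rename f psi) (rename f chi)
  | fex psi => fun f => fex (rename (option_map f) psi)
  end f.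
End Syntax.

Section Semantics.
Variables (L : language) (M : structure L).

Fixpoint teval {V : Type} (e : V -> M) (t : term L V) : M :=
  match t with
  | tvar v => e v
  | tapp f args => @funI L M f (fun i => teval e (args i))
  end.

Definition extend {V : Type} (e : V -> M) (c : M) : option V -> M :=
  fun o => match o with Some v => e v | None => c end.

(* satisfaction with quantifiers relativized to D (D = everything gives the
   usual satisfaction in M; D a substructure gives satisfaction in D) *)
Fixpoint sat_in (D : M -> Prop) {V : Type} (phi : formula L V) : (V -> M) -> Prop :=
  match phi in formula _ V0 return (V0 -> M) -> Prop with
  | feq t1 t2 => fun e => teval e t1 = teval e t2
  | frel r args => fun e => @relI L M r (fun i => teval e (args i))
  | fneg psi => fun e => ~ sat_in D psi e
  | fand psi chi => fun e => sat_in D psi e /\ sat_in D chi e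
  | fex psi => fun e => exists c, D c /\ sat_in D psi (extend e c)
  end.

Definition sat {V : Type} (phi : formula L V) (e : V -> M) : Prop :=
  sat_in (fun _ => True) phi e.

(* ---------- cardinalities: "|A| < kappa", kappa represented by a type K ---------- *)
Definition injective {A B : Type} (f : A -> B) := forall x y, f x = f y -> x = y.
Definition card_lt (A B : Type) : Prop :=
  (exists f : A -> B, injective f) /\ ~ (exists g : B -> A, injective g).
Definition small (K : Type) (A : Type) := card_lt A K.
Definition small_set (K : Type) (D : M -> Prop) := small K {x : M | D x}.

Definition elem_submodel (D : M -> Prop) : Prop :=
  (exists x, D x) /\
  (forall (f : funcs L) (args : Fin.t (@farity L f) -> M),
      (forall i, D (args i)) -> D (@funI L M f args)) /\
  (forall (V : Type) (phi : formula L V) (e : V -> M),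
      (forall v, D (e v)) -> (sat_in D phi e <-> sat phi e)).

Definition small_model (K : Type) (D : M -> Prop) :=
  small_set K D /\ elem_submodel D.

Definition automorphism (s : M -> M) : Prop :=
  (exists t : M -> M, (forall x, s (t x) = x) /\ (forall x, t (s x) = x)) /\
  (forall f args, s (@funI L M f args) = @funI L M f (fun i => s (args i))) /\
  (forall r args, @relI L M r args <-> @relI L M r (fun i => s (args i))).

Definition fixes_pointwise (s : M -> M) (D : M -> Prop) := forall x, D x -> s x = x.

(* generators of Autf_L: automorphisms fixing pointwise a small elementary
   submodel.  This generating set is closed under inverses, so the generated
   subgroup consists of the finite compositions of generators. *)
Definition autf_generator (K : Type) (s : M -> M) :=
  automorphism s /\ exists D, small_model K D /\ fixes_pointwise s D.

Definition autfL (K : Type) (s : M -> M) : Prop :=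
  exists l : list (M -> M), Forall (autf_generator K) l /\
    forall x, s x = fold_right (fun g h => fun y => g (h y)) (fun y => y) l x.

Section Tuples.
Variable X : Type.

(* a (X -> M) is an X-tuple; parameters from D are the extra variables *)
Definition env_over (D : M -> Prop) (a : X -> M) : X + {x : M | D x} -> M :=
  fun w => match w with inl x => a x | inr c => proj1_sig c end.

Definition env_global (a : X -> M) : X + M -> M :=
  fun w => match w with inl x => a x | inr c => c end.

Definition equiv_over (D : M -> Prop) (a b : X -> M) : Prop :=
  forall phi : formula L (X + {x : M | D x}),
    sat phi (env_over D a) <-> sat phi (env_over D b).

Definition same_type (a b : X -> M) : Prop :=
  forall phi : formula L X, sat phi a <-> sat phi b.

Definition fin_sat {W : Type} (ev : (X -> M) -> W -> M)
  (q : formula L W -> Prop) : Prop :=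
  forall l : list (formula L W), Forall q l ->
    exists b : X -> M, Forall (fun phi => sat phi (ev b)) l.

Definition complete_type {W : Type} (ev : (X -> M) -> W -> M)
  (q : formula L W -> Prop) : Prop :=
  fin_sat ev q /\ forall phi, q phi \/ q (fneg phi).

Definition complete_type_empty (p : formula L X -> Prop) :=
  complete_type (fun b => b) p.

Definition global_type (q : formula L (X + M) -> Prop) :=
  complete_type env_global q.

Definition realizes (p : formula L X -> Prop) (a : X -> M) :=
  forall phi, p phi -> sat phi a.

Definition aut_invariant (q : formula L (X + M) -> Prop) : Prop :=
  forall s, automorphism s ->
    forall phi, q phi <-> q (@rename L _ _ (fun w => match w with
                                     | inl x => inl x | inr c => inr (s c) end) phi).

Definition extremely_amenable (p : formula L X -> Prop) : Prop :=
  exists q, global_type q /\ (forall phi, p phi -> q (@rename L _ _ inl phi)) /\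
            aut_invariant q.

Definition lascar_equiv (K : Type) (a b : X -> M) : Prop :=
  exists s, autfL K s /\ forall x, s (a x) = b x.

Definition lascar_dist_le (K : Type) (n : nat) (a b : X -> M) : Prop :=
  exists m, m <= n /\
    exists chain : nat -> X -> M,
      (forall x, chain 0 x = a x) /\ (forall x, chain m x = b x) /\
      forall i, i < m -> exists D, small_model K D /\ equiv_over D (chain i) (chain (S i)).
End Tuples.

Definition saturated (K : Type) : Prop :=
  forall A : M -> Prop, small_set K A ->
    forall q : formula L (unit + {x : M | A x}) -> Prop,
      fin_sat unit (env_over unit A) q ->
      exists b : unit -> M, forall phi, q phi -> sat phi (env_over unit A b).

Definition strongly_homogeneous (K : Type) : Prop :=
  forall I : Type, small K I -> forall a b : I -> M, same_type I a b ->
    exists s, automorphism s /\ forall i, s (a i) = b i.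

(* kappa is large: |L| + aleph_0 < kappa *)
Definition monster (K : Type) : Prop :=
  card_lt (funcs L + rels L + nat) K /\ saturated K /\ strongly_homogeneous K.

Definition theory_extremely_amenable (K : Type) : Prop :=
  forall X : Type, small K X -> forall p : formula L X -> Prop,
    complete_type_empty X p -> extremely_amenable X p.

End Semantics.

(* Main.v *)
Require Import Defs.
From Stdlib Require Import List Arith Lia Classical ClassicalEpsilon FunctionalExtensionality ProofIrrelevance Cantor.
From mathcomp Require boolp classical_sets.

Section Sem.
Variables (L : language) (M : structure L).

Lemma teval_ext {V} (e1 e2 : V -> M) (t : term L V) :
  (forall v, e1 v = e2 v) -> teval L M e1 t = teval L M e2 t.
Proof.
  intros H; induction t as [v|f args IH]; simpl; auto.
  f_equal; apply functional_extensionality; auto.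
Qed.

Lemma sat_in_ext (D : M -> Prop) {V} (phi : formula L V) :
  forall e1 e2 : V -> M, (forall v, e1 v = e2 v) -> (sat_in L M D phi e1 <-> sat_in L M D phi e2).
Proof.
  induction phi as [V t1 t2|V r args|V psi IH|V psi IH1 chi IH2|V psi IH]; intros e1 e2 H; simpl.
  - rewrite (teval_ext e1 e2 t1 H), (teval_ext e1 e2 t2 H); tauto.
  - replace (fun i => teval L M e1 (args i)) with (fun i => teval L M e2 (args i)); [tauto|].
    apply functional_extensionality; intros; symmetry; apply teval_ext; auto.
  - rewrite (IH e1 e2 H); tauto.
  - rewrite (IH1 e1 e2 H), (IH2 e1 e2 H); tauto.
  - assert (E : forall c, forall v, extend L M e1 c v = extend L M e2 c v)
      by (intros c [v|]; simpl; auto).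
    split; intros [c [Hc Hs]]; exists c; split; auto.
    + rewrite <- (IH _ _ (E c)); auto.
    + rewrite (IH _ _ (E c)); auto.
Qed.

Lemma teval_rename {V W} (f : V -> W) (e : W -> M) (t : term L V) :
  teval L M e (trename L f t) = teval L M (fun v => e (f v)) t.
Proof.
  induction t as [v|g args IH]; simpl; auto.
  f_equal; apply functional_extensionality; auto.
Qed.

Lemma sat_in_rename (D : M -> Prop) {V} (phi : formula L V) :
  forall W (f : V -> W) (e : W -> M),
  sat_in L M D (rename L f phi) e <-> sat_in L M D phi (fun v => e (f v)).
Proof.
  induction phi as [V t1 t2|V r args|V psi IH|V psi IH1 chi IH2|V psi IH]; intros W f e; simpl.
  - rewrite !teval_rename; tauto.
  - replace (fun i => teval L M e (trename L f (args i))) with (fun i => teval L M (fun v => e (f v)) (args i)); [tauto|].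
    apply functional_extensionality; intros; symmetry; apply teval_rename.
  - rewrite IH; tauto.
  - rewrite IH1, IH2; tauto.
  - split; intros [c [Hc Hs]]; exists c; split; auto.
    + rewrite IH in Hs. revert Hs; apply sat_in_ext; intros [v|]; reflexivity.
    + rewrite IH. revert Hs; apply sat_in_ext; intros [v|]; reflexivity.
Qed.

Lemma trename_rename {V W U} (f : W -> U) (g : V -> W) (t : term L V) :
  trename L f (trename L g t) = trename L (fun v => f (g v)) t.
Proof.
  induction t as [v|h args IH]; simpl; auto.
  f_equal; apply functional_extensionality; auto.
Qed.

Lemma rename_ext {V W} (f g : V -> W) (phi : formula L V) :
  (forall v, f v = g v) -> rename L f phi = rename L g phi.
Proof.
  intros H; replace f with g; auto; apply functional_extensionality; auto.
Qed.

Lemma rename_rename {V} (phi : formula L V) :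
  forall W U (f : W -> U) (g : V -> W),
  rename L f (rename L g phi) = rename L (fun v => f (g v)) phi.
Proof.
  induction phi as [V t1 t2|V r args|V psi IH|V psi IH1 chi IH2|V psi IH]; intros W U f g; simpl.
  - rewrite !trename_rename; auto.
  - f_equal; apply functional_extensionality; intros; apply trename_rename.
  - rewrite IH; auto.
  - rewrite IH1, IH2; auto.
  - rewrite IH; f_equal; apply rename_ext; intros [v|]; reflexivity.
Qed.

Lemma teval_aut (s : M -> M) (Hs : automorphism L M s) {V} (e : V -> M) (t : term L V) :
  teval L M (fun v => s (e v)) t = s (teval L M e t).
Proof.
  destruct Hs as [_ [Hf _]].
  induction t as [v|f args IH]; simpl; auto.
  rewrite Hf; f_equal; apply functional_extensionality; auto.
Qed.

Lemma sat_in_aut (s t : M -> M) (Hs : automorphism L M s)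
  (Hts : forall x, t (s x) = x) (Hst : forall x, s (t x) = x)
  (D : M -> Prop) {V} (phi : formula L V) :
  forall e : V -> M,
  sat_in L M D phi e <-> sat_in L M (fun y => D (t y)) phi (fun v => s (e v)).
Proof.
  induction phi as [V t1 t2|V r args|V psi IH|V psi IH1 chi IH2|V psi IH]; intros e; simpl.
  - rewrite !(teval_aut s Hs); split; intros H; [congruence|].
    rewrite <- (Hts (teval L M e t1)), H; auto.
  - replace (fun i => teval L M (fun v => s (e v)) (args i)) with (fun i => s (teval L M e (args i))).
    + destruct Hs as [_ [_ Hr]]; apply Hr.
    + apply functional_extensionality; intros; symmetry; apply (teval_aut s Hs).
  - rewrite IH; tauto.
  - rewrite IH1, IH2; tauto.
  - split; intros [c [Hc H]].
    + exists (s c); rewrite Hts; split; auto.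
      rewrite IH in H; revert H; apply sat_in_ext; intros [v|]; reflexivity.
    + exists (t c); split; auto.
      rewrite IH; revert H; apply sat_in_ext; intros [v|]; simpl; auto.
Qed.

Lemma sat_aut (s t : M -> M) (Hs : automorphism L M s)
  (Hts : forall x, t (s x) = x) (Hst : forall x, s (t x) = x) {V} (phi : formula L V) (e : V -> M) :
  sat L M phi e <-> sat L M phi (fun v => s (e v)).
Proof. unfold sat; apply (sat_in_aut s t Hs Hts Hst (fun _ => True)). Qed.

Lemma aut_inv (s t : M -> M) (Hs : automorphism L M s)
  (Hts : forall x, t (s x) = x) (Hst : forall x, s (t x) = x) : automorphism L M t.
Proof.
  destruct Hs as [_ [Hf Hr]]. split; [exists s; auto|split].
  - intros f args. rewrite <- (Hts (funI L M f (fun i => t (args i)))), Hf.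
    f_equal; f_equal; apply functional_extensionality; intros; rewrite Hst; auto.
  - intros r args. rewrite (Hr r (fun i => t (args i))).
    replace (fun i => s (t (args i))) with args; [tauto|].
    apply functional_extensionality; intros; rewrite Hst; auto.
Qed.

Lemma aut_comp (s1 s2 : M -> M) : automorphism L M s1 -> automorphism L M s2 ->
  automorphism L M (fun x => s1 (s2 x)).
Proof.
  intros [[t1 [H1 H1']] [Hf1 Hr1]] [[t2 [H2 H2']] [Hf2 Hr2]]; split; [|split].
  - exists (fun x => t2 (t1 x)); split; intros; [rewrite H2, H1|rewrite H1', H2']; auto.
  - intros f args; rewrite Hf2, Hf1; auto.
  - intros r args; rewrite (Hr2 r args), (Hr1 r); tauto.
Qed.

End Sem.

Lemma zorn_pre (T : Type) (t0 : T) (R : T -> T -> Prop) :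
  (forall t, R t t) -> (forall r s t, R r s -> R s t -> R r t) ->
  (forall A : T -> Prop, (forall s t, A s -> A t -> R s t \/ R t s) ->
     exists t, forall s, A s -> R s t) ->
  exists t, forall s, R t s -> R s t.
Proof.
  intros H1 H2 H3.
  destruct (@classical_sets.ZL_preorder T t0 (fun s t => boolp.asbool (R s t))) as [t Ht].
  - intros t; apply boolp.asboolT; auto.
  - intros r s t Hrs Hst; apply boolp.asboolT; apply boolp.asboolW in Hrs, Hst; eauto.
  - intros A HA. destruct (H3 A) as [t Ht].
    + intros s t Hs Ht; destruct (HA s t Hs Ht) as [H|H]; apply boolp.asboolW in H; auto.
    + exists t; intros s Hs; apply boolp.asboolT; auto.
  - exists t; intros s Hs. apply boolp.asboolW. apply Ht. apply boolp.asboolT; auto.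
Qed.

Definition inj (A B : Type) := exists f : A -> B, injective f.

Lemma inj_refl A : inj A A.
Proof. exists (fun x => x); intros x y H; auto. Qed.

Lemma inj_trans A B C : inj A B -> inj B C -> inj A C.
Proof. intros [f Hf] [g Hg]; exists (fun x => g (f x)); intros x y H; auto. Qed.

Lemma sig_ext {A} {P : A -> Prop} (x y : {a | P a}) : proj1_sig x = proj1_sig y -> x = y.
Proof. destruct x, y; simpl; intros; subst; f_equal; apply proof_irrelevance. Qed.

Definition cid {A} {P : A -> Prop} (H : exists x, P x) := constructive_indefinite_description P H.

Lemma comparability (A B : Type) : inj A B \/ inj B A.
Proof.
  set (P := fun G : A -> B -> Prop => (forall a b b', G a b -> G a b' -> b = b') /\
                                      (forall a a' b, G a b -> G a' b -> a = a')).
  assert (t0 : {G | P G}) by (exists (fun _ _ => False); split; intros; contradiction).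
  destruct (zorn_pre {G | P G} t0 (fun s t => forall a b, proj1_sig s a b -> proj1_sig t a b))
    as [[G [HG1 HG2]] Hmax]; auto.
  - intros Ch Htot.
    assert (PU : P (fun a b => exists s, Ch s /\ proj1_sig s a b)).
    { split.
      - intros a b b' [s [Hs Hab]] [s' [Hs' Hab']].
        destruct (Htot s s' Hs Hs') as [Hle|Hle]; destruct s as [Gs [Ps1 Ps2]];
        destruct s' as [Gs' [Ps1' Ps2']]; simpl in *; eauto.
      - intros a a' b [s [Hs Hab]] [s' [Hs' Hab']].
        destruct (Htot s s' Hs Hs') as [Hle|Hle]; destruct s as [Gs [Ps1 Ps2]];
        destruct s' as [Gs' [Ps1' Ps2']]; simpl in *; eauto. }
    exists (exist _ _ PU); intros s Hs a b Hab; simpl; eauto.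
  - simpl in Hmax.
    destruct (classic (forall a, exists b, G a b)) as [Hall|Hn1].
    { left. exists (fun a => proj1_sig (cid (Hall a))). intros x y Hxy.
      destruct (cid (Hall x)) as [bx Hx]; destruct (cid (Hall y)) as [by' Hy]; simpl in Hxy.
      subst; eauto. }
    destruct (classic (forall b, exists a, G a b)) as [Hall|Hn2].
    { right. exists (fun b => proj1_sig (cid (Hall b))). intros x y Hxy.
      destruct (cid (Hall x)) as [ax Hx]; destruct (cid (Hall y)) as [ay Hy]; simpl in Hxy.
      subst; eauto. }
    exfalso. apply not_all_ex_not in Hn1, Hn2. destruct Hn1 as [a0 Ha0], Hn2 as [b0 Hb0].
    assert (PG' : P (fun a b => G a b \/ (a = a0 /\ b = b0))).
    { split.
      - intros a b b' [H|[-> ->]] [H'|[E ->]]; subst; eauto.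
        + exfalso; eauto.
        + exfalso; eauto.
      - intros a a' b [H|[-> ->]] [H'|[-> E]]; subst; eauto.
        + exfalso; eauto.
        + exfalso; eauto. }
    assert (H := Hmax (exist _ _ PG') (fun a b H => or_introl H) a0 b0 (or_intror (conj eq_refl eq_refl))).
    simpl in H. eauto.
Qed.

Definition emi := excluded_middle_informative.

Lemma hessenberg (A : Type) (iota : nat -> A) (Hi : injective iota) :
  exists pr : A -> A -> A, forall x y x' y', pr x y = pr x' y' -> x = x' /\ y = y'.
Proof.
  set (Good := fun (B : A -> Prop) (f : A -> A -> A) =>
    (forall n, B (iota n)) /\ (forall x y, B x -> B y -> B (f x y)) /\
    (forall x y x' y', B x -> B y -> B x' -> B y' -> f x y = f x' y' -> x = x' /\ y = y')).
  set (T := {s : (A -> Prop) * (A -> A -> A) | Good (fst s) (snd s)}).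
  set (R := fun s t : T => (forall x, fst (proj1_sig s) x -> fst (proj1_sig t) x) /\
     (forall x y, fst (proj1_sig s) x -> fst (proj1_sig s) y ->
        snd (proj1_sig s) x y = snd (proj1_sig t) x y)).
  set (iinv := fun a => match emi (exists n, iota n = a) with
                        | left H => proj1_sig (cid H) | right _ => 0 end).
  assert (Hiinv : forall n, iinv (iota n) = n).
  { intros n; unfold iinv; destruct (emi _) as [H|H].
    - destruct (cid H) as [m Hm]; simpl; auto.
    - exfalso; eauto. }
  assert (G0 : Good (fun a => exists n, iota n = a) (fun x y => iota (to_nat (iinv x, iinv y)))).
  { split; [|split].
    - intros n; exists n; auto.
    - intros; eauto.
    - intros x y x' y' [m <-] [n <-] [m' <-] [n' <-] H.
      apply Hi in H. rewrite !Hiinv in H.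
      assert (E := f_equal of_nat H). rewrite !cancel_of_to in E. inversion E; auto. }
  set (t0 := exist _ (_, _) G0 : T).
  destruct (zorn_pre T t0 R) as [[[B f] [GB [Gf Ginj]]] Hmax].
  - intros t; split; auto.
  - intros r s t [H1 H2] [H3 H4]; split; auto.
    intros x y Hx Hy; rewrite H2; auto.
  - intros Ch Htot.
    destruct (classic (exists s, Ch s)) as [[s1 Hs1]|Hne].
    2:{ exists t0; intros s Hs; exfalso; eauto. }
    set (U := fun x => exists s, Ch s /\ fst (proj1_sig s) x).
    assert (Hpair : forall x y, U x -> U y -> exists s, Ch s /\ fst (proj1_sig s) x /\ fst (proj1_sig s) y).
    { intros x y [s [Hs Hx]] [s' [Hs' Hy]].
      destruct (Htot s s' Hs Hs') as [[H _]|[H _]]; eauto. }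
    set (fU := fun x y => match emi (exists s, Ch s /\ fst (proj1_sig s) x /\ fst (proj1_sig s) y) with
                          | left H => snd (proj1_sig (proj1_sig (cid H))) x y | right _ => x end).
    assert (HfU : forall s x y, Ch s -> fst (proj1_sig s) x -> fst (proj1_sig s) y ->
               fU x y = snd (proj1_sig s) x y).
    { intros s x y Hs Hx Hy; unfold fU; destruct (emi _) as [H|H]; [|exfalso; eauto].
      destruct (cid H) as [s' [Hs' [Hx' Hy']]]; simpl.
      destruct (Htot s s' Hs Hs') as [[_ E]|[_ E]]; [symmetry|]; auto. }
    assert (GU : Good U fU).
    { split; [|split].
      - intros n; exists s1; split; auto. destruct s1 as [[B1 f1] [HB1 ?]]; simpl; apply HB1.
      - intros x y Hx Hy. destruct (Hpair x y Hx Hy) as [s [Hs [Hx' Hy']]].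
        rewrite (HfU s x y Hs Hx' Hy'). exists s; split; auto.
        destruct s as [[? ?] [? [? ?]]]; simpl in *; auto.
      - intros x y x' y' Hx Hy Hx' Hy' E.
        destruct (Hpair x y Hx Hy) as [s [Hs [Hx1 Hy1]]].
        destruct (Hpair x' y' Hx' Hy') as [s' [Hs' [Hx2 Hy2]]].
        rewrite (HfU s x y Hs Hx1 Hy1), (HfU s' x' y' Hs' Hx2 Hy2) in E.
        destruct (Htot s s' Hs Hs') as [[H1 H2]|[H1 H2]].
        + rewrite (H2 x y Hx1 Hy1) in E. apply H1 in Hx1, Hy1.
          destruct s' as [[B1 f1] [? [? Hinj]]]; simpl in *; apply Hinj; auto.
        + rewrite (H2 x' y' Hx2 Hy2) in E. apply H1 in Hx2, Hy2.
          destruct s as [[B1 f1] [? [? Hinj]]]; simpl in *; apply Hinj; auto. }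
    exists (exist _ (U, fU) GU). intros s Hs; split; simpl.
    + intros x Hx; exists s; auto.
    + intros x y Hx Hy; symmetry; apply HfU; auto.
  - simpl in *.
    set (tau := fun (b : bool) x => f x (iota (if b then 1 else 0))).
    assert (Htau : forall b b' x x', B x -> B x' -> tau b x = tau b' x' -> b = b' /\ x = x').
    { intros b b' x x' Hx Hx' E; unfold tau in E.
      apply Ginj in E; auto. destruct E as [E1 E2]; apply Hi in E2.
      destruct b, b'; simpl in E2; try discriminate; auto. }
    assert (HtauB : forall b x, B x -> B (tau b x)) by (intros; unfold tau; auto).
    destruct (comparability {a | ~ B a} {a | B a}) as [[j Hj]|[j Hj]].
    + set (phi := fun a => match emi (B a) with
                           | left _ => tau true a
                           | right h => tau false (proj1_sig (j (exist _ a h))) end).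
      assert (Hphi : forall a, B (phi a)).
      { intros a; unfold phi; destruct (emi _); apply HtauB; auto. apply proj2_sig. }
      exists (fun x y => f (phi x) (phi y)).
      assert (Hpi : forall a a', phi a = phi a' -> a = a').
      { intros a a'; unfold phi; destruct (emi (B a)) as [h|h]; destruct (emi (B a')) as [h'|h'];
        intros E; apply Htau in E; try apply proj2_sig; auto; destruct E as [E1 E2]; try discriminate; auto.
        apply sig_ext in E2. apply Hj in E2. inversion E2; auto. }
      intros x y x' y' E. apply Ginj in E; auto. destruct E; split; auto.
    + exfalso.
      set (J := fun a => match emi (B a) with left h => proj1_sig (j (exist _ a h)) | right _ => a end).
      assert (HJ1 : forall a, B a -> ~ B (J a)).
      { intros a h; unfold J; destruct (emi _); [apply proj2_sig|contradiction]. }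
      assert (HJ2 : forall a a', B a -> B a' -> J a = J a' -> a = a').
      { intros a a' h h'; unfold J; destruct (emi (B a)); destruct (emi (B a')); try contradiction.
        intros E; apply sig_ext, Hj in E; inversion E; auto. }
      set (B' := fun x => B x \/ exists a, B a /\ J a = x).
      set (Jinv := fun x => match emi (exists a, B a /\ J a = x) with
                            | left H => proj1_sig (cid H) | right _ => x end).
      assert (HJinv : forall a, B a -> Jinv (J a) = a /\ B (Jinv (J a))).
      { intros a h; unfold Jinv; destruct (emi _) as [H|H].
        - destruct (cid H) as [a' [Ha' E]]; simpl; split; auto.
        - exfalso; eauto. }
      set (rho := fun x => match emi (B x) with left _ => tau true x | right _ => tau false (Jinv x) end).
      assert (Hrho : forall x, B' x -> B (rho x)).
      { intros x [h|[a [h <-]]]; unfold rho; destruct (emi _) as [h'|h'].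
        - apply HtauB; auto.
        - contradiction.
        - apply HtauB; auto.
        - apply HtauB, HJinv; auto. }
      assert (Hrhoi : forall x x', B' x -> B' x' -> rho x = rho x' -> x = x').
      { intros x x' Hx Hx'; unfold rho.
        destruct (emi (B x)) as [h|h]; destruct (emi (B x')) as [h'|h']; intros E.
        - apply Htau in E; tauto.
        - destruct Hx' as [?|[a' [ha' <-]]]; [contradiction|].
          apply Htau in E; [destruct E; discriminate|auto|apply HJinv; auto].
        - destruct Hx as [?|[a [ha <-]]]; [contradiction|].
          apply Htau in E; [destruct E; discriminate|apply HJinv; auto|auto].
        - destruct Hx as [?|[a [ha <-]]]; [contradiction|].
          destruct Hx' as [?|[a' [ha' <-]]]; [contradiction|].
          apply Htau in E; [|apply HJinv; auto|apply HJinv; auto].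
          destruct E as [_ E]. rewrite (proj1 (HJinv a ha)), (proj1 (HJinv a' ha')) in E; subst; auto. }
      set (f' := fun x y => match emi (B x /\ B y) with
                            | left _ => f x y | right _ => J (f (rho x) (rho y)) end).
      assert (G' : Good B' f').
      { split; [|split].
        - intros n; left; auto.
        - intros x y Hx Hy; unfold f'; destruct (emi _) as [[h h']|h].
          + left; auto.
          + right; eexists; split; [|reflexivity]; apply Gf; apply Hrho; auto.
        - intros x y x' y' Hx Hy Hx' Hy'; unfold f'.
          destruct (emi (B x /\ B y)) as [[h1 h2]|h]; destruct (emi (B x' /\ B y')) as [[h1' h2']|h'];
            intros E.
          + apply Ginj; auto.
          + exfalso; apply (HJ1 (f (rho x') (rho y'))); [apply Gf; apply Hrho; auto|].
            rewrite <- E; auto.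
          + exfalso; apply (HJ1 (f (rho x) (rho y))); [apply Gf; apply Hrho; auto|].
            rewrite E; auto.
          + apply HJ2 in E; try (apply Gf; apply Hrho; auto).
            apply Ginj in E; try apply Hrho; auto. destruct E; split; apply Hrhoi; auto. }
      assert (HR : R (exist _ (B, f) (conj GB (conj Gf Ginj))) (exist _ (B', f') G')).
      { split; simpl.
        - intros x h; left; auto.
        - intros x y hx hy; unfold f'; destruct (emi _); tauto. }
      destruct (Hmax _ HR) as [Hb _]; simpl in Hb.
      apply (HJ1 (iota 0)); auto. apply Hb. right; exists (iota 0); auto.
Qed.

Lemma absorb (B : Type) : inj nat B -> inj (B + B) B /\ inj (B * B) B.
Proof.
  intros [i Hi]. destruct (hessenberg B i Hi) as [pr Hpr]. split.
  - exists (fun s => match s with inl b => pr b (i 0) | inr b => pr b (i 1) end).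
    intros [x|x] [y|y] E; apply Hpr in E; destruct E as [E1 E2]; subst; auto;
      apply Hi in E2; discriminate.
  - exists (fun p => pr (fst p) (snd p)). intros [x y] [x' y'] E; apply Hpr in E; simpl in E;
    destruct E; subst; auto.
Qed.

Lemma inj_summap A A' B B' : inj A A' -> inj B B' -> inj (A + B) (A' + B').
Proof.
  intros [f Hf] [g Hg]; exists (fun s => match s with inl a => inl (f a) | inr b => inr (g b) end).
  intros [x|x] [y|y] E; inversion E; f_equal; auto.
Qed.

Lemma small_down (K Y Z : Type) : inj Y Z -> small K Z -> small K Y.
Proof.
  intros HYZ [HZK HKZ]; split.
  - eapply inj_trans; eauto.
  - intros HKY; apply HKZ; eapply inj_trans; eauto.
Qed.

Lemma small_sum (K A B : Type) : small K nat -> small K A -> small K B -> small K (A + B).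
Proof.
  intros Hn [HA HA'] [HB HB']; split.
  - eapply inj_trans; [apply inj_summap; eauto|]. apply absorb. apply Hn.
  - intros HK.
    assert (Hcase : forall C D, inj C D -> ~ inj K D -> inj K (C + D) -> False).
    { intros C D HCD HKD HKCD.
      assert (H2 : inj K (D + D)) by (eapply inj_trans; [apply HKCD|apply inj_summap; auto using inj_refl]).
      destruct (comparability nat D) as [HnD|HDn].
      - apply HKD; eapply inj_trans; [apply H2|apply absorb; auto].
      - apply (proj2 Hn). eapply inj_trans; [apply H2|].
        eapply inj_trans; [apply inj_summap; apply HDn|]. apply absorb, inj_refl. }
    destruct (comparability A B) as [H|H].
    + apply (Hcase A B H HB' HK).
    + apply (Hcase B A H HA'). destruct HK as [k Hk].
      exists (fun x => match k x with inl a => inr a | inr b => inl b end).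
      intros x y E; apply Hk; destruct (k x), (k y); inversion E; auto.
Qed.

Fixpoint inter {X} (a b : nat -> X) (k : nat) : X :=
  match k with 0 => a 0 | S 0 => b 0 | S (S k) => inter (fun j => a (S j)) (fun j => b (S j)) k end.

Lemma inter_l {X} k : forall (a b : nat -> X), inter a b (k + k) = a k.
Proof. induction k; intros; simpl; auto. rewrite Nat.add_succ_r; apply IHk. Qed.

Lemma inter_r {X} k : forall (a b : nat -> X), inter a b (S (k + k)) = b k.
Proof. induction k; intros; simpl; auto. rewrite Nat.add_succ_r; apply IHk. Qed.

Lemma inter_none {X} k : forall m (a b : nat -> option X),
  (forall j, m <= j -> a j = None) -> (forall j, m <= j -> b j = None) ->
  m + m <= k -> inter a b k = None.
Proof.
  induction k as [k IH] using lt_wf_ind; intros m a b Ha Hb Hk.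
  destruct k as [|[|k]]; simpl.
  - apply Ha; lia.
  - apply Hb; lia.
  - destruct m as [|m].
    + apply (IH k ltac:(lia) 0); [intros; apply Ha; lia|intros; apply Hb; lia|lia].
    + apply (IH k ltac:(lia) m); [intros; apply Ha; lia|intros; apply Hb; lia|lia].
Qed.

Section NF.
Variables (L : language) (M : structure L).

Definition envg {V} (g : nat -> option V) (e : V -> M) (d : M) : nat -> M :=
  fun k => match g k with Some v => e v | None => d end.

Definition dbl (k : nat) := k + k.
Definition sdbl (k : nat) := S (k + k).

Lemma envg_inter_l {V} (g1 g2 : nat -> option V) e d k :
  envg (inter g1 g2) e d (dbl k) = envg g1 e d k.
Proof. unfold envg, dbl; rewrite inter_l; auto. Qed.
Lemma envg_inter_r {V} (g1 g2 : nat -> option V) e d k :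
  envg (inter g1 g2) e d (sdbl k) = envg g2 e d k.
Proof. unfold envg, sdbl; rewrite inter_r; auto. Qed.

Definition tnf {V} (t : term L V) (t' : term L nat) (g : nat -> option V) (n : nat) :=
  (forall k, n <= k -> g k = None) /\ forall e d, teval L M e t = teval L M (envg g e d) t'.

Lemma fam_nf (n : nat) {V} : forall (args : Fin.t n -> term L V),
  (forall i, exists t' g m, tnf (args i) t' g m) ->
  exists (args' : Fin.t n -> term L nat) g m, (forall k, m <= k -> g k = None) /\
    forall e d i, teval L M e (args i) = teval L M (envg g e d) (args' i).
Proof.
  induction n as [|n IH]; intros args H.
  - exists (fun i => Fin.case0 _ i), (fun _ => None), 0; split; auto.
    intros e d i; apply (Fin.case0 (fun i => _) i).
  - destruct (H Fin.F1) as [t0 [g0 [m0 [Hs0 He0]]]].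
    destruct (IH (fun i => args (Fin.FS i)) (fun i => H (Fin.FS i))) as [a1 [g1 [m1 [Hs1 He1]]]].
    exists (fun i => Fin.caseS' i (fun _ => term L nat) (trename L dbl t0) (fun j => trename L sdbl (a1 j))).
    exists (inter g0 g1), (max m0 m1 + max m0 m1); split.
    + intros k Hk; apply (inter_none k (max m0 m1)); auto; intros j Hj; [apply Hs0|apply Hs1]; lia.
    + intros e d i. pattern i. apply Fin.caseS'; simpl.
      * rewrite teval_rename, He0 with (d := d). apply teval_ext; intros; rewrite envg_inter_l; auto.
      * intros j; rewrite teval_rename, He1 with (d := d). apply teval_ext; intros; rewrite envg_inter_r; auto.
Qed.

Lemma term_nf {V} (t : term L V) : exists t' g n, tnf t t' g n.
Proof.
  induction t as [v|f args IH].
  - exists (tvar 0), (fun k => match k with 0 => Some v | _ => None end), 1; split.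
    + intros [|k] Hk; [lia|auto].
    + intros; reflexivity.
  - destruct (fam_nf _ args IH) as [a' [g [m [Hs He]]]].
    exists (tapp f a'), g, m; split; auto.
    intros e d; simpl; f_equal; apply functional_extensionality; intros i; auto.
Qed.

Definition fnf {V} (phi : formula L V) (psi : formula L nat) (g : nat -> option V) (n : nat) :=
  (forall k, n <= k -> g k = None) /\
  forall D e d, sat_in L M D phi e <-> sat_in L M D psi (envg g e d).

Lemma formula_nf {V} (phi : formula L V) : exists psi g n, fnf phi psi g n.
Proof.
  induction phi as [V t1 t2|V r args|V psi IH|V psi IH1 chi IH2|V psi IH].
  - destruct (term_nf t1) as [a [g1 [m1 [Hs1 He1]]]].
    destruct (term_nf t2) as [b [g2 [m2 [Hs2 He2]]]].
    exists (feq (trename L dbl a) (trename L sdbl b)), (inter g1 g2), (max m1 m2 + max m1 m2); split.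
    + intros k Hk; apply (inter_none k (max m1 m2)); auto; intros j Hj; [apply Hs1|apply Hs2]; lia.
    + intros D e d; simpl. rewrite (teval_rename L M dbl), (teval_rename L M sdbl), (He1 e d), (He2 e d).
      rewrite (teval_ext L M (fun v => envg (inter g1 g2) e d (dbl v)) (envg g1 e d) a) by (intros; apply envg_inter_l).
      rewrite (teval_ext L M (fun v => envg (inter g1 g2) e d (sdbl v)) (envg g2 e d) b) by (intros; apply envg_inter_r).
      tauto.
  - assert (IH : forall i, exists t' g m, tnf (args i) t' g m) by (intros; apply term_nf).
    destruct (fam_nf _ args IH) as [a' [g [m [Hs He]]]].
    exists (frel r a'), g, m; split; auto.
    intros D e d; simpl.
    replace (fun i => teval L M e (args i)) with (fun i => teval L M (envg g e d) (a' i)); [tauto|].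
    apply functional_extensionality; intros; symmetry; auto.
  - destruct IH as [p [g [n [Hs He]]]]; exists (fneg p), g, n; split; auto.
    intros D e d; simpl; rewrite (He D e d); tauto.
  - destruct IH1 as [a [g1 [m1 [Hs1 He1]]]]. destruct IH2 as [b [g2 [m2 [Hs2 He2]]]].
    exists (fand (rename L dbl a) (rename L sdbl b)), (inter g1 g2), (max m1 m2 + max m1 m2); split.
    + intros k Hk; apply (inter_none k (max m1 m2)); auto; intros j Hj; [apply Hs1|apply Hs2]; lia.
    + intros D e d; simpl. rewrite !sat_in_rename, (He1 D e d), (He2 D e d).
      rewrite (sat_in_ext L M D a (envg g1 e d) (fun v => envg (inter g1 g2) e d (dbl v))) by (intros; symmetry; apply envg_inter_l).
      rewrite (sat_in_ext L M D b (envg g2 e d) (fun v => envg (inter g1 g2) e d (sdbl v))) by (intros; symmetry; apply envg_inter_r).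
      tauto.
  - destruct IH as [p [g [n [Hs He]]]].
    set (h := fun k => match g k with Some None => None | _ => Some k end).
    set (g' := fun k => match g k with Some (Some v) => Some v | _ => None end).
    exists (fex (rename L h p)), g', n; split.
    + intros k Hk; unfold g'; rewrite Hs; auto.
    + intros D e d; simpl. split; intros [c [Hc H]]; exists c; split; auto.
      * rewrite sat_in_rename. rewrite (He D _ d) in H. revert H; apply sat_in_ext.
        intros k; unfold envg, h, g', extend; cbv beta; destruct (g k) as [[v|]|] eqn:E; simpl; rewrite ?E; reflexivity.
      * rewrite sat_in_rename in H. rewrite (He D _ d). revert H; apply sat_in_ext.
        intros k; unfold envg, h, g', extend; cbv beta; destruct (g k) as [[v|]|] eqn:E; simpl; rewrite ?E; reflexivity.
Qed.

End NF.

Section Enc.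
Variable L : language.
Definition A0 := (funcs L + rels L + nat)%type.
Variable pr : A0 -> A0 -> A0.
Hypothesis Hpr : forall x y x' y', pr x y = pr x' y' -> x = x' /\ y = y'.
Definition tag (n : nat) : A0 := inr n.

Fixpoint encfin (n : nat) : (Fin.t n -> A0) -> A0 :=
  match n with
  | 0 => fun _ => tag 0
  | S n' => fun h => pr (h Fin.F1) (encfin n' (fun i => h (Fin.FS i)))
  end.

Lemma encfin_inj n : forall h1 h2, encfin n h1 = encfin n h2 -> forall i, h1 i = h2 i.
Proof.
  induction n as [|n IH]; intros h1 h2 E i.
  - apply (Fin.case0 (fun i => h1 i = h2 i) i).
  - simpl in E; apply Hpr in E; destruct E as [E1 E2].
    pattern i; apply Fin.caseS'; auto.
    intros j; apply (IH (fun i => h1 (Fin.FS i)) (fun i => h2 (Fin.FS i)) E2).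
Qed.

Fixpoint enct {V} (ve : V -> nat) (t : term L V) : A0 :=
  match t with
  | tvar v => pr (tag 0) (tag (ve v))
  | tapp f args => pr (tag 1) (pr (inl (inl f)) (encfin _ (fun i => enct ve (args i))))
  end.

Lemma enct_inj {V} (ve : V -> nat) (Hve : injective ve) (t1 : term L V) :
  forall t2, enct ve t1 = enct ve t2 -> t1 = t2.
Proof.
  induction t1 as [v|f args IH]; intros [v'|f' args'] E; simpl in E;
    apply Hpr in E; destruct E as [E1 E2]; unfold tag in *; try (inversion E1; fail).
  - inversion E2; f_equal; auto.
  - apply Hpr in E2; destruct E2 as [E2 E3]. inversion E2; subst.
    f_equal; apply functional_extensionality; intros i.
    apply IH; apply (encfin_inj _ _ _ E3).
Qed.

Definition optenc {V} (ve : V -> nat) : option V -> nat :=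
  fun o => match o with None => 0 | Some v => S (ve v) end.

Lemma optenc_inj {V} (ve : V -> nat) : injective ve -> injective (optenc ve).
Proof. intros H [x|] [y|] E; simpl in E; try discriminate; auto. inversion E; f_equal; auto. Qed.

Fixpoint encf {V} (phi : formula L V) : (V -> nat) -> A0 :=
  match phi in formula _ V0 return (V0 -> nat) -> A0 with
  | feq _ t1 t2 => fun ve => pr (tag 0) (pr (enct ve t1) (enct ve t2))
  | frel _ r args => fun ve => pr (tag 1) (pr (inl (inr r)) (encfin _ (fun i => enct ve (args i))))
  | fneg _ psi => fun ve => pr (tag 2) (encf psi ve)
  | fand _ a b => fun ve => pr (tag 3) (pr (encf a ve) (encf b ve))
  | fex _ psi => fun ve => pr (tag 4) (encf psi (optenc ve))
  end.

Lemma encf_inj {V} (phi1 : formula L V) :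
  forall (ve : V -> nat), injective ve -> forall phi2, encf phi1 ve = encf phi2 ve -> phi1 = phi2.
Proof.
  induction phi1 as [V t1 t2|V r args|V psi IH|V psi IH1 chi IH2|V psi IH]; intros ve Hve phi2;
  destruct phi2 as [t1' t2'|r' args'|psi'|psi' chi'|psi']; intros E; simpl in E;
    apply Hpr in E; destruct E as [E1 E2]; unfold tag in *; try (inversion E1; fail).
  - apply Hpr in E2; destruct E2 as [E2 E3]. f_equal; eapply enct_inj; eauto.
  - apply Hpr in E2; destruct E2 as [E2 E3]. inversion E2; subst.
    f_equal; apply functional_extensionality; intros i.
    eapply enct_inj; eauto; apply (encfin_inj _ _ _ E3).
  - f_equal; eauto.
  - apply Hpr in E2; destruct E2 as [E2 E3]. f_equal; eauto.
  - f_equal; eapply IH; eauto. apply optenc_inj; auto.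
Qed.

Inductive stree := sleaf : stree | snode : formula L (option nat) -> slist -> stree
with slist := snil : slist | scons : stree -> slist -> slist.

Scheme stree_ind2 := Induction for stree Sort Prop
with slist_ind2 := Induction for slist Sort Prop.

Definition ve0 : option nat -> nat := optenc (fun n => n).

Fixpoint encs (t : stree) : A0 :=
  match t with
  | sleaf => pr (tag 0) (tag 0)
  | snode phi ts => pr (tag 1) (pr (encf phi ve0) (encl ts))
  end
with encl (ts : slist) : A0 :=
  match ts with
  | snil => pr (tag 0) (tag 0)
  | scons t ts => pr (tag 1) (pr (encs t) (encl ts))
  end.

Lemma encs_inj : forall t1 t2, encs t1 = encs t2 -> t1 = t2.
Proof.
  apply (stree_ind2 (fun t1 => forall t2, encs t1 = encs t2 -> t1 = t2)
                    (fun l1 => forall l2, encl l1 = encl l2 -> l1 = l2)).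
  - intros [|phi ts] E; simpl in E; auto. apply Hpr in E; destruct E as [E _]; inversion E.
  - intros phi ts IH [|phi' ts'] E; simpl in E; apply Hpr in E; destruct E as [E1 E2];
      unfold tag in *; try (inversion E1; fail).
    apply Hpr in E2; destruct E2 as [E2 E3]. f_equal; auto.
    eapply encf_inj; eauto. apply optenc_inj; intros x y H; auto.
  - intros [|t ts] E; simpl in E; auto. apply Hpr in E; destruct E as [E _]; inversion E.
  - intros t IHt ts IH [|t' ts'] E; simpl in E; apply Hpr in E; destruct E as [E1 E2];
      unfold tag in *; try (inversion E1; fail).
    apply Hpr in E2; destruct E2 as [E2 E3]. f_equal; auto.
Qed.
End Enc.

Section LS.
Variables (L : language) (M : structure L) (c0 : M).

Definition skolem (phi : formula L (option nat)) (l : list M) : M :=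
  match emi (exists c, sat L M phi (extend L M (fun k => nth k l c0) c)) with
  | left H => proj1_sig (cid H) | right _ => c0 end.

Lemma skolem_spec phi l c : sat L M phi (extend L M (fun k => nth k l c0) c) ->
  sat L M phi (extend L M (fun k => nth k l c0) (skolem phi l)).
Proof.
  intros H; unfold skolem; destruct (emi _) as [H'|H']; [|exfalso; eauto].
  destruct (cid H'); simpl; auto.
Qed.

Fixpoint sval (t : stree L) : M :=
  match t with
  | sleaf => c0
  | snode phi ts => skolem phi (svals ts)
  end
with svals (ts : slist L) : list M :=
  match ts with
  | snil => nil
  | scons t ts => sval t :: svals ts
  end.

Definition hull (x : M) : Prop := exists t, sval t = x.

Lemma hull_c0 : hull c0.
Proof. exists (sleaf L); auto. Qed.

Lemma hull_skolem phi l : Forall hull l -> hull (skolem phi l).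
Proof.
  intros H. assert (exists ts, svals ts = l) as [ts Hts].
  { induction H as [|x l [t Ht] _ [ts Hts]]; [exists (snil L); auto|].
    exists (scons L t ts); simpl; congruence. }
  exists (snode L phi ts); simpl; congruence.
Qed.

Lemma hull_TV {V} (phi : formula L V) :
  forall e, (forall v, hull (e v)) -> (sat_in L M hull phi e <-> sat L M phi e).
Proof.
  induction phi as [V t1 t2|V r args|V psi IH|V psi IH1 chi IH2|V psi IH]; intros e He; unfold sat in *; simpl;
    try tauto.
  - rewrite IH; auto; tauto.
  - rewrite IH1, IH2; auto; tauto.
  - split.
    + intros [c [Hc H]]; exists c; split; auto. apply IH; auto. intros [v|]; simpl; auto.
    + intros [c [_ H]].
      destruct (formula_nf L M psi) as [p [g [n [Hs Hnf]]]].
      set (h := fun k => match g k with Some None => None | _ => Some k end).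
      set (g' := fun k => match g k with Some (Some v) => Some v | _ => None end).
      set (l := map (fun k => envg L M g' e c0 k) (seq 0 n)).
      assert (Key : forall c, sat L M psi (extend L M e c) <->
                    sat L M (rename L h p) (extend L M (fun k => nth k l c0) c)).
      { intros c'. unfold sat. rewrite sat_in_rename, (Hnf _ _ c0). apply sat_in_ext.
        intros k. unfold envg at 1. unfold h.
        assert (Hl : forall k, k < n -> nth k l c0 = envg L M g' e c0 k).
        { intros j Hj. unfold l.
          rewrite nth_indep with (d' := envg L M g' e c0 0) by (rewrite length_map, length_seq; auto).
          rewrite map_nth, seq_nth by auto. reflexivity. }
        assert (Hl' : forall k, n <= k -> nth k l c0 = c0).
        { intros j Hj; apply nth_overflow. unfold l; rewrite length_map, length_seq; auto. }
        destruct (g k) as [[v|]|] eqn:Eg; unfold extend; simpl.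
        - destruct (le_lt_dec n k) as [Hk|Hk]; [rewrite Hs in Eg; auto; discriminate|].
          rewrite Hl; auto. unfold envg, g'; rewrite Eg; reflexivity.
        - reflexivity.
        - destruct (le_lt_dec n k) as [Hk|Hk]; [rewrite Hl'; auto|].
          rewrite Hl; auto. unfold envg, g'; rewrite Eg; reflexivity. }
      exists (skolem (rename L h p) l). split.
      * apply hull_skolem. unfold l. apply Forall_forall; intros x Hx.
        apply in_map_iff in Hx; destruct Hx as [k [<- _]]. unfold envg, g'.
        destruct (g k) as [[v|]|]; auto using hull_c0.
      * apply IH. { intros [v|]; simpl; auto. apply hull_skolem.
                    unfold l. apply Forall_forall; intros x Hx.
                    apply in_map_iff in Hx; destruct Hx as [k [<- _]]. unfold envg, g'.
                    destruct (g k) as [[v'|]|]; auto using hull_c0. }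
        apply Key. apply (skolem_spec _ _ c). apply Key. exact H.
Qed.

Lemma hull_elem : elem_submodel L M hull.
Proof.
  split; [exists c0; apply hull_c0|split].
  - intros f args Hargs.
    set (phi := fex (feq (tvar None) (tapp f (fun i => tvar (Some i)))) : formula L (Fin.t (farity L f))).
    assert (H : sat L M phi args) by (unfold sat, phi; simpl; exists (funI L M f args); split; auto).
    apply hull_TV in H; auto. destruct H as [c [Hc E]]; simpl in E. replace (funI L M f args) with c; auto.
  - intros V phi e He; apply hull_TV; auto.
Qed.

Lemma hull_inj (pr : A0 L -> A0 L -> A0 L) (Hpr : forall x y x' y', pr x y = pr x' y' -> x = x' /\ y = y') :
  inj {x | hull x} (A0 L).
Proof.
  exists (fun x : {x | hull x} => encs L pr (proj1_sig (@cid _ (fun t => sval t = proj1_sig x) (proj2_sig x)))).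
  intros [x Hx] [y Hy] E; simpl in E.
  destruct (cid Hx) as [t Ht]; destruct (cid Hy) as [t' Ht']; simpl in E.
  apply encs_inj in E; auto. apply sig_ext; simpl; congruence.
Qed.

End LS.

Lemma exists_small_model (L : language) (M : structure L) (K : Type)
  (HK : card_lt (funcs L + rels L + nat) K) (c0 : M) :
  exists D, small_model L M K D.
Proof.
  destruct (hessenberg (A0 L) (fun n => inr n)) as [pr Hpr].
  { intros x y E; inversion E; auto. }
  exists (hull L M c0); split.
  - unfold small_set. eapply small_down; [apply (hull_inj L M c0 pr Hpr)|]. exact HK.
  - apply hull_elem.
Qed.

Section Close.
Variables (L : language) (M : structure L).

Definition shift {V} (w : V + nat) : option V + nat :=
  match w with inl v => inl (Some v) | inr 0 => inl None | inr (S j) => inr j end.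

Fixpoint close (n : nat) : forall V, V -> formula L (V + nat) -> formula L V :=
  match n with
  | 0 => fun V v0 chi => rename L (fun w => match w with inl v => v | inr _ => v0 end) chi
  | S n => fun V v0 chi => fex (close n (option V) (Some v0) (rename L shift chi))
  end.

Lemma close_sat n : forall V (v0 : V) chi (e : V -> M),
  sat L M (close n V v0 chi) e <->
  exists dv : nat -> M, sat L M chi (fun w => match w with inl v => e v | inr j => if j <? n then dv j else e v0 end).
Proof.
  induction n as [|n IH]; intros V v0 chi e; simpl; unfold sat in *.
  - rewrite sat_in_rename. split; [intros H; exists (fun _ => e v0)|intros [dv H]];
      revert H; apply sat_in_ext; intros [v|j]; reflexivity.
  - split.
    + intros [c [_ H]]. apply IH in H. destruct H as [dv H]. rewrite sat_in_rename in H.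
      exists (fun j => match j with 0 => c | S j => dv j end). revert H; apply sat_in_ext.
      intros [v|[|j]]; simpl; auto.
    + intros [dv H]. exists (dv 0); split; auto. apply IH. exists (fun j => dv (S j)).
      rewrite sat_in_rename. revert H; apply sat_in_ext. intros [v|[|j]]; simpl; auto.
Qed.

Definition ftop {V} : formula L V := fneg (fex (fneg (feq (tvar None) (tvar None)))).
Definition fconj {V} (l : list (formula L V)) : formula L V := fold_right fand ftop l.

Lemma fconj_sat {V} (l : list (formula L V)) e :
  sat L M (fconj l) e <-> Forall (fun phi => sat L M phi e) l.
Proof.
  induction l as [|phi l IH]; simpl.
  - split; auto. intros _ [c [_ H]]; apply H; reflexivity.
  - unfold sat in *; simpl. rewrite IH. split; [intros [H1 H2]; constructor; auto|intros H; inversion H; auto].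
Qed.

Definition nfall {V} (phi : formula L V) : {psi : formula L nat & {g : nat -> option V & {n | fnf L M phi psi g n}}}.
Proof.
  destruct (cid (formula_nf L M phi)) as [psi H1]; destruct (cid H1) as [g H2]; destruct (cid H2) as [n H3].
  exact (existT _ psi (existT _ g (exist _ n H3))).
Defined.
End Close.

Section Ext.
Variables (L : language) (M : structure L) (X : Type) (A : M -> Prop) (Y : X -> Prop) (h : X -> M) (x0 : X).

Definition A' : M -> Prop := fun z => A z \/ exists y, Y y /\ h y = z.
Definition U1 := (unit + {z | A' z})%type.

Definition sel (g : nat -> option (X + {x | A x})) (n : nat) (x : X) : nat :=
  match emi (exists k, k < n /\ g k = Some (inl x)) with left H => proj1_sig (cid H) | right _ => 0 end.

Lemma sel_spec g n x k : k < n -> g k = Some (inl x) -> sel g n x < n /\ g (sel g n x) = Some (inl x).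
Proof.
  intros Hk Hg; unfold sel; destruct (emi _) as [H|H]; [|exfalso; eauto].
  destruct (cid H) as [k' [H1 H2]]; simpl; auto.
Qed.

Definition rho (g : nat -> option (X + {x | A x})) (n : nat) (k : nat) : U1 + nat :=
  match g k with
  | None => inl (inl tt)
  | Some (inr a) => inl (inr (exist A' (proj1_sig a) (or_introl (proj2_sig a))))
  | Some (inl x) =>
      match emi (x = x0) with
      | left _ => inl (inl tt)
      | right _ => match emi (Y x) with
                   | left Hy => inl (inr (exist A' (h x) (or_intror (ex_intro _ x (conj Hy eq_refl)))))
                   | right _ => inr (sel g n x)
                   end
      end
  end.

Definition gamma (phi : formula L (X + {x | A x})) : formula L U1 :=
  let psi := projT1 (nfall L M phi) in
  let g := projT1 (projT2 (nfall L M phi)) in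
  let n := proj1_sig (projT2 (projT2 (nfall L M phi))) in
  close L n U1 (inl tt) (rename L (rho g n) psi).

Lemma gamma_spec (phi : formula L (X + {x | A x})) (z : M) : ~ Y x0 ->
  (sat L M (gamma phi) (env_over L M unit A' (fun _ => z)) <->
   exists b, b x0 = z /\ (forall x, Y x -> b x = h x) /\ sat L M phi (env_over L M X A b)).
Proof.
  intros HY0. unfold gamma.
  destruct (nfall L M phi) as [psi [g [n [Hs Hnf]]]]; simpl.
  rewrite close_sat. unfold sat at 1. setoid_rewrite sat_in_rename.
  assert (Hlt : forall k x, g k = Some x -> k < n).
  { intros k x E; destruct (le_lt_dec n k) as [Hk|Hk]; auto. rewrite Hs in E; auto; discriminate. }
  split.
  - intros [dv H].
    set (b := fun x => match emi (x = x0) with left _ => z | right _ =>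
                         match emi (Y x) with left _ => h x | right _ => dv (sel g n x) end end).
    exists b; split; [|split].
    + unfold b; destruct (emi _); congruence.
    + intros x Hx; unfold b; destruct (emi (x = x0)); [subst; contradiction|].
      destruct (emi (Y x)); [auto|contradiction].
    + unfold sat; rewrite (Hnf _ _ z). revert H; apply sat_in_ext.
      intros k; unfold rho, envg. destruct (g k) as [[x|a]|] eqn:Eg; simpl; auto.
      unfold b. destruct (emi (x = x0)); simpl; auto.
      destruct (emi (Y x)); simpl; auto.
      destruct (sel_spec g n x k (Hlt _ _ Eg) Eg) as [H1 H2].
      rewrite (proj2 (Nat.ltb_lt _ _) H1); auto.
  - intros [b [Hb0 [Hb H]]].
    exists (fun j => match g j with Some (inl x) => b x | _ => z end).
    unfold sat in H; rewrite (Hnf _ _ z) in H. revert H; apply sat_in_ext.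
    intros k; unfold rho, envg. destruct (g k) as [[x|a]|] eqn:Eg; simpl; auto.
    destruct (emi (x = x0)); simpl; [congruence|].
    destruct (emi (Y x)); simpl; [symmetry; auto|].
    destruct (sel_spec g n x k (Hlt _ _ Eg) Eg) as [H1 H2].
    rewrite (proj2 (Nat.ltb_lt _ _) H1), H2; auto.
Qed.
End Ext.

Theorem sat_multi (L : language) (M : structure L) (K : Type)
  (HnK : small K nat) (Hsat : saturated L M K)
  (X : Type) (HX : small K X) (A : M -> Prop) (HA : small_set L M K A)
  (Sg : formula L (X + {x | A x}) -> Prop)
  (Hfs : fin_sat L M X (env_over L M X A) Sg) :
  exists b, forall phi, Sg phi -> sat L M phi (env_over L M X A b).
Proof.
  destruct (Hfs nil (Forall_nil _)) as [b0 _].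
  set (env := env_over L M X A).
  set (Good := fun (Y : X -> Prop) (h : X -> M) => forall l, Forall Sg l ->
          exists b, (forall x, Y x -> b x = h x) /\ Forall (fun phi => sat L M phi (env b)) l).
  set (T := {s : (X -> Prop) * (X -> M) | Good (fst s) (snd s)}).
  set (R := fun s t : T => (forall x, fst (proj1_sig s) x -> fst (proj1_sig t) x) /\
                           (forall x, fst (proj1_sig s) x -> snd (proj1_sig s) x = snd (proj1_sig t) x)).
  assert (G0 : Good (fun _ => False) b0).
  { intros l Hl; destruct (Hfs l Hl) as [b Hb]; exists b; split; auto; intros; contradiction. }
  set (t0 := exist _ (_, _) G0 : T).
  destruct (zorn_pre T t0 R) as [[[Y h] GY] Hmax].
  - intros t; split; auto.
  - intros r s t [H1 H2] [H3 H4]; split; auto. intros x Hx; rewrite H2; auto.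
  - intros Ch Htot.
    destruct (classic (exists s, Ch s)) as [[s1 Hs1]|Hne].
    2:{ exists t0; intros s Hs; exfalso; eauto. }
    set (U := fun x => exists s, Ch s /\ fst (proj1_sig s) x).
    set (hU := fun x => match emi (U x) with left H => snd (proj1_sig (proj1_sig (cid H))) x | right _ => b0 x end).
    assert (HhU : forall s x, Ch s -> fst (proj1_sig s) x -> hU x = snd (proj1_sig s) x).
    { intros s x Hs Hx; unfold hU; destruct (emi _) as [H|H]; [|exfalso; apply H; exists s; auto].
      destruct (cid H) as [s' [Hs' Hx']]; simpl.
      destruct (Htot s s' Hs Hs') as [[_ E]|[_ E]]; [symmetry|]; auto. }
    assert (GU : Good U hU).
    { intros l Hl.
      destruct (formula_nf L M (fconj L l)) as [p [g [n [Hs Hnf]]]].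
      set (xs := flat_map (fun k => match g k with Some (inl x) => x :: nil | _ => nil end) (seq 0 n)).
      assert (Hs0 : exists s0 : T, (s0 = t0 \/ Ch s0) /\ forall x, In x xs -> U x -> fst (proj1_sig s0) x).
      { clear Hnf. induction xs as [|x xs IH].
        - exists t0; split; [left; reflexivity|intros y []].
        - destruct IH as [s0 [Hs0 Hin]].
          destruct (classic (U x)) as [[s' [Hs' Hx]]|HnU].
          + destruct Hs0 as [->|Hs0].
            * exists s'; split; auto. intros y [<-|Hy] HUy; auto.
              apply Hin in Hy; auto; contradiction.
            * destruct (Htot s0 s' Hs0 Hs') as [[H1 _]|[H1 _]].
              -- exists s'; split; auto. intros y [<-|Hy] HUy; auto.
              -- exists s0; split; auto. intros y [<-|Hy] HUy; auto.
          + exists s0; split; auto. intros y [<-|Hy] HUy; [contradiction|auto]. }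
      destruct Hs0 as [[[Y0 h0] G0'] [Hs0 Hin]]; simpl in Hin.
      destruct (G0' l Hl) as [b [Hbag Hbl]].
      set (b' := fun x => match emi (U x) with left _ => hU x | right _ => b x end).
      exists b'; split.
      { intros x Hx; unfold b'; destruct (emi _); [auto|contradiction]. }
      apply fconj_sat; apply fconj_sat in Hbl. revert Hbl.
      destruct (classic (inhabited M)) as [[d]|Hem].
      2:{ unfold sat; apply sat_in_ext. intros w; exfalso; apply Hem; constructor.
          destruct w as [x|a]; [exact (b x)|exact (proj1_sig a)]. }
      unfold sat; rewrite !(Hnf _ _ d). apply sat_in_ext.
      intros k; unfold envg. destruct (g k) as [[x|a]|] eqn:Eg; simpl; auto.
      unfold b'; destruct (emi (U x)) as [HU|HU]; auto.
      assert (Hk : k < n) by (destruct (le_lt_dec n k) as [Hk|Hk]; auto; rewrite Hs in Eg; auto; discriminate).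
      assert (Hx : In x xs).
      { unfold xs; apply in_flat_map; exists k; split; [apply in_seq; lia|rewrite Eg; left; auto]. }
      specialize (Hin x Hx HU). rewrite (Hbag x Hin).
      destruct Hs0 as [E|Hs0].
      - inversion E; subst; contradiction.
      - apply (HhU _ x Hs0 Hin). }
    exists (exist _ (U, hU) GU). intros s Hs; split; simpl.
    + intros x Hx; exists s; auto.
    + intros x Hx; symmetry; apply HhU; auto.
  - simpl in Hmax.
    assert (HYall : forall x, Y x).
    { intros x0; apply NNPP; intros HY0.
      set (A1 := A' L M X A Y h).
      assert (HA1 : small_set L M K A1).
      { unfold small_set. apply (small_down K _ ({x | A x} + X)); [|apply small_sum; auto].
        assert (H : forall z : {z | A1 z}, ~ A (proj1_sig z) -> exists y, Y y /\ h y = proj1_sig z).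
        { intros [z [Hz|Hz]] Hn; simpl in *; [contradiction|auto]. }
        exists (fun z => match emi (A (proj1_sig z)) with
                         | left Ha => inl (exist A _ Ha)
                         | right Hna => inr (proj1_sig (cid (H z Hna))) end).
        intros z1 z2; destruct (emi (A (proj1_sig z1))) as [H1|H1]; destruct (emi (A (proj1_sig z2))) as [H2|H2];
          intros E; try discriminate; injection E; intros E'.
        - apply sig_ext; auto.
        - apply sig_ext.
          destruct (cid (H z1 H1)) as [y1 [Hy1 Ey1]]; destruct (cid (H z2 H2)) as [y2 [Hy2 Ey2]]; simpl in *.
          congruence. }
      set (Gm := fun gm : formula L (U1 L M X A Y h) => exists l, Forall Sg l /\ gm = gamma L M X A Y h x0 (fconj L l)).
      assert (Hfin : fin_sat L M unit (env_over L M unit A1) Gm).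
      { intros lg Hlg.
        assert (Hgather : exists Lall, Forall Sg Lall /\ forall gm, In gm lg ->
                   exists l, (forall phi, In phi l -> In phi Lall) /\ gm = gamma L M X A Y h x0 (fconj L l)).
        { induction Hlg as [|gm lg [l [Hl ->]] _ [Lall [HLall Hin]]].
          - exists nil; split; auto. intros gm [].
          - exists (l ++ Lall); split; [apply Forall_app; auto|].
            intros gm [<-|Hgm].
            + exists l; split; auto. intros; apply in_or_app; auto.
            + destruct (Hin gm Hgm) as [l' [Hl' ->]]; exists l'; split; auto.
              intros; apply in_or_app; auto. }
        destruct Hgather as [Lall [HLall Hin]].
        destruct (GY Lall HLall) as [b [Hbag HbL]].
        exists (fun _ => b x0). apply Forall_forall; intros gm Hgm.
        destruct (Hin gm Hgm) as [l [Hl ->]].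
        apply (gamma_spec L M X A Y h x0 _ _ HY0). exists b; split; auto; split; auto.
        apply fconj_sat. apply Forall_forall; intros phi Hphi.
        rewrite Forall_forall in HbL; apply HbL; auto. }
      destruct (Hsat A1 HA1 Gm Hfin) as [b1 Hb1].
      set (z := b1 tt).
      set (h' := fun x => match emi (x = x0) with left _ => z | right _ => h x end).
      assert (GY' : Good (fun x => Y x \/ x = x0) h').
      { intros l Hl.
        assert (Hg : sat L M (gamma L M X A Y h x0 (fconj L l)) (env_over L M unit A1 (fun _ => z))).
        { assert (H := Hb1 _ (ex_intro _ l (conj Hl eq_refl))). revert H. unfold sat; apply sat_in_ext.
          intros [[]|a]; reflexivity. }
        apply (gamma_spec L M X A Y h x0 _ _ HY0) in Hg. destruct Hg as [b [Hb0 [Hbag Hbl]]].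
        exists b; split; [|apply fconj_sat; auto].
        intros x [Hx| ->].
        - unfold h'; destruct (emi (x = x0)) as [->|]; [contradiction|auto].
        - unfold h'; destruct (emi (x0 = x0)); [auto|contradiction]. }
      assert (HR : R (exist _ (Y, h) GY) (exist _ (_, h') GY')).
      { split; simpl; auto. intros x Hx; unfold h'; destruct (emi (x = x0)) as [->|]; [contradiction|auto]. }
      destruct (Hmax _ HR) as [H _]; simpl in H. apply HY0, H; auto. }
    exists h; intros phi Hphi.
    destruct (GY (phi :: nil) (Forall_cons _ Hphi (Forall_nil _))) as [b [Hbag Hb]].
    inversion Hb as [|? ? Hb' _]; subst. revert Hb'. unfold sat; apply sat_in_ext.
    intros [x|a]; simpl; auto. symmetry; apply Hbag; simpl; auto.
Qed.

Section Main.
Variables (L : language) (M : structure L) (K : Type) (X : Type).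

Definition iotaD (Dp : M -> Prop) (w : X + {x | Dp x}) : X + M :=
  match w with inl x => inl x | inr m => inr (proj1_sig m) end.

Definition realq (q : formula L (X + M) -> Prop) (Dp : M -> Prop) (c : X -> M) : Prop :=
  forall phi : formula L (X + {x | Dp x}), q (rename L (iotaD Dp) phi) -> sat L M phi (env_over L M X Dp c).

Lemma realq_exists (HnK : small K nat) (Hsat : saturated L M K) (HX : small K X)
  (q : formula L (X + M) -> Prop) (Hq : global_type L M X q) (Dp : M -> Prop) (HD : small_set L M K Dp) :
  exists c, realq q Dp c.
Proof.
  destruct (sat_multi L M K HnK Hsat X HX Dp HD (fun phi => q (rename L (iotaD Dp) phi))) as [c Hc].
  - intros l Hl. destruct (proj1 Hq (map (rename L (iotaD Dp)) l)) as [b Hb].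
    + apply Forall_map; auto.
    + exists b. apply Forall_map in Hb. revert Hb; apply Forall_impl.
      intros phi H. unfold sat in *; rewrite sat_in_rename in H. revert H; apply sat_in_ext.
      intros [x|m]; reflexivity.
  - exists c; exact Hc.
Qed.

Lemma realq_consistent (q : formula L (X + M) -> Prop) (Hq : global_type L M X q) psi :
  q psi -> q (fneg psi) -> False.
Proof.
  intros H1 H2. destruct (proj1 Hq (psi :: fneg psi :: nil)) as [b Hb].
  - repeat constructor; auto.
  - inversion Hb as [|? ? Hb1 Hb2]; inversion Hb2 as [|? ? Hb3 _]. apply Hb3; auto.
Qed.

Lemma realq_equiv q (Hq : global_type L M X q) Dp c1 c2 :
  realq q Dp c1 -> realq q Dp c2 -> equiv_over L M X Dp c1 c2.
Proof.
  intros H1 H2 phi. destruct (proj2 Hq (rename L (iotaD Dp) phi)) as [H|H].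
  - split; intros _; auto.
  - assert (E1 := H1 (fneg phi) H); assert (E2 := H2 (fneg phi) H).
    unfold sat in *; simpl in *; tauto.
Qed.

Lemma realq_realizes q p Dp c : (forall phi, p phi -> q (rename L inl phi)) -> realq q Dp c -> realizes L M X p c.
Proof.
  intros Hpq Hc phi Hphi. apply Hpq in Hphi.
  assert (E : rename L inl phi = rename L (iotaD Dp) (rename L inl phi)).
  { rewrite rename_rename; apply rename_ext; reflexivity. }
  rewrite E in Hphi. apply Hc in Hphi. unfold sat in *; rewrite sat_in_rename in Hphi.
  revert Hphi; apply sat_in_ext; reflexivity.
Qed.

Lemma realq_mono q Dp Dp' c : (forall y, Dp' y -> Dp y) -> realq q Dp c -> realq q Dp' c.
Proof.
  intros Hsub Hc phi Hphi.
  set (j := fun w : X + {x | Dp' x} => match w with inl x => inl x | inr m => inr (exist Dp (proj1_sig m) (Hsub _ (proj2_sig m))) end).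
  assert (E : rename L (iotaD Dp') phi = rename L (iotaD Dp) (rename L j phi)).
  { rewrite rename_rename; apply rename_ext; intros [x|m]; reflexivity. }
  rewrite E in Hphi. apply Hc in Hphi. unfold sat in *; rewrite sat_in_rename in Hphi.
  revert Hphi; apply sat_in_ext; intros [x|m]; reflexivity.
Qed.

Lemma realq_transport q (Hinv : aut_invariant L M X q) Dp c (s t : M -> M)
  (Hs : automorphism L M s) (Hts : forall x, t (s x) = x) (Hst : forall x, s (t x) = x) :
  realq q Dp c -> realq q (fun y => Dp (t y)) (fun x => s (c x)).
Proof.
  intros Hc phi Hphi.
  assert (Ht : automorphism L M t) by (apply (aut_inv L M s t); auto).
  apply (proj1 (Hinv t Ht _)) in Hphi.
  set (kap := fun w : X + {y | Dp (t y)} => match w with inl x => inl x | inr m => inr (exist Dp (t (proj1_sig m)) (proj2_sig m)) end).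
  assert (E : rename L (fun w => match w with inl x => inl x | inr c => inr (t c) end) (rename L (iotaD (fun y => Dp (t y))) phi)
              = rename L (iotaD Dp) (rename L kap phi)).
  { rewrite !rename_rename; apply rename_ext; intros [x|m]; reflexivity. }
  rewrite E in Hphi. apply Hc in Hphi. unfold sat in *; rewrite sat_in_rename in Hphi.
  apply (sat_aut L M s t Hs Hts Hst) in Hphi. revert Hphi; apply sat_in_ext.
  intros [x|m]; simpl; auto.
Qed.

End Main.

Lemma small_model_transport (L : language) (M : structure L) (K : Type) (Dp : M -> Prop) (s t : M -> M)
  (Hs : automorphism L M s) (Hts : forall x, t (s x) = x) (Hst : forall x, s (t x) = x) :
  small_model L M K Dp -> small_model L M K (fun y => Dp (t y)).
Proof.
  intros [HDs [[m Hm] [Hcl HTV]]].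
  assert (Ht : automorphism L M t) by (apply (aut_inv L M s t); auto).
  split; [|split; [|split]].
  - unfold small_set in *. eapply small_down; [|exact HDs].
    exists (fun y : {y | Dp (t y)} => exist Dp (t (proj1_sig y)) (proj2_sig y)).
    intros [y1 H1] [y2 H2] E; apply sig_ext; simpl.
    apply (f_equal (@proj1_sig _ _)) in E; simpl in E. rewrite <- (Hst y1), E, Hst; auto.
  - exists (s m); rewrite Hts; auto.
  - intros f args Hargs. destruct Ht as [_ [Hf _]]. rewrite Hf. apply Hcl; auto.
  - intros V phi e He.
    rewrite (sat_in_ext L M _ phi e (fun v => s (t (e v)))) by (intros; rewrite Hst; auto).
    rewrite <- (sat_in_aut L M s t Hs Hts Hst Dp phi (fun v => t (e v))).
    rewrite HTV by auto.
    rewrite (sat_aut L M s t Hs Hts Hst phi (fun v => t (e v))). unfold sat; apply sat_in_ext; intros; apply Hst.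
Qed.

Definition foldc {M : Type} (l : list (M -> M)) : M -> M := fold_right (fun g h => fun y => g (h y)) (fun y => y) l.

Lemma fold_aut (L : language) (M : structure L) (l : list (M -> M)) (K : Type) : Forall (autf_generator L M K) l -> automorphism L M (foldc l).
Proof.
  induction 1 as [|g l [Hg _] _ IH]; simpl.
  - split; [exists (fun y => y); split; auto|split]; intros; [reflexivity|tauto].
  - apply aut_comp; auto.
Qed.

Theorem proposition5p2 (L : language) (C : structure L) (K : Type)
  (Hmonster : monster L C K) :
  (forall (X : Type), small K X ->
     forall p : formula L X -> Prop,
       complete_type_empty L C X p -> extremely_amenable L C X p ->
       forall a b : X -> C, realizes L C X p a -> realizes L C X p b ->
         lascar_equiv L C X K a b /\ lascar_dist_le L C X K 2 a b)
  /\
  (theory_extremely_amenable L C K ->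
     (forall (X : Type), small K X ->
        forall a b : X -> C, same_type L C X a b -> lascar_equiv L C X K a b)
     /\ (forall s : C -> C, automorphism L C s -> autfL L C K s)).
Proof.
  destruct Hmonster as [HK [Hsat Hhom]].
  assert (HnK : small K nat).
  { eapply small_down; [|exact HK]. exists (fun n => inr n); intros x y E; inversion E; auto. }
  assert (Part1 : forall (X : Type), small K X ->
     forall p : formula L X -> Prop,
       complete_type_empty L C X p -> extremely_amenable L C X p ->
       forall a b : X -> C, realizes L C X p a -> realizes L C X p b ->
         lascar_equiv L C X K a b /\ lascar_dist_le L C X K 2 a b).
  { intros X HX p Hp [q [Hq [Hpq Hinv]]] a b Ha Hb.
    destruct (classic (inhabited X)) as [[x1]|HnX].
    2:{ split.
        - exists (fun y => y); split.
          + exists nil; split; auto.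
          + intros x; exfalso; apply HnX; constructor; auto.
        - exists 0; split; [lia|]. exists (fun _ => a); split; [auto|split].
          + intros x; exfalso; apply HnX; constructor; auto.
          + intros i Hi; lia. }
    destruct (exists_small_model L C K HK (a x1)) as [M0 HM0].
    assert (Hcons : forall phi, p phi -> p (fneg phi) -> False).
    { intros phi H1 H2. destruct (proj1 Hp (phi :: fneg phi :: nil)) as [e He].
      - repeat constructor; auto.
      - inversion He as [|? ? He1 He2]; inversion He2 as [|? ? He3 _]. apply He3; auto. }
    assert (Hst : forall u v, realizes L C X p u -> realizes L C X p v -> same_type L C X u v).
    { intros u v Hu Hv phi. destruct (proj2 Hp phi) as [H|H].
      - split; intros; auto.
      - assert (E1 := Hu _ H); assert (E2 := Hv _ H); unfold sat in *; simpl in *; tauto. }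
    destruct (realq_exists L C K X HnK Hsat HX q Hq M0 (proj1 HM0)) as [c Hc].
    assert (Hcp := realq_realizes L C X q p M0 c Hpq Hc).
    destruct (Hhom X HX c a (Hst _ _ Hcp Ha)) as [sg [Hsg Hsga]].
    destruct (Hhom X HX c b (Hst _ _ Hcp Hb)) as [ta [Hta Htab]].
    destruct (proj1 Hsg) as [sgi [Hsg1 Hsg2]].
    destruct (proj1 Hta) as [tai [Hta1 Hta2]].
    set (M1 := fun y => M0 (sgi y)). set (M2 := fun y => M0 (tai y)).
    assert (HM1 : small_model L C K M1) by (apply (small_model_transport L C K M0 sg sgi); auto).
    assert (HM2 : small_model L C K M2) by (apply (small_model_transport L C K M0 ta tai); auto).
    assert (Ha1 : realq L C X q M1 a).
    { assert (H := realq_transport L C X q Hinv M0 c sg sgi Hsg Hsg2 Hsg1 Hc).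
      intros phi Hphi; apply H in Hphi; revert Hphi; unfold sat; apply sat_in_ext.
      intros [x|m]; simpl; auto. }
    assert (Hb2 : realq L C X q M2 b).
    { assert (H := realq_transport L C X q Hinv M0 c ta tai Hta Hta2 Hta1 Hc).
      intros phi Hphi; apply H in Hphi; revert Hphi; unfold sat; apply sat_in_ext.
      intros [x|m]; simpl; auto. }
    assert (HM12 : small_set L C K (fun y => M1 y \/ M2 y)).
    { unfold small_set. apply (small_down K _ ({y | M1 y} + {y | M2 y})); [|apply small_sum; auto; [apply HM1|apply HM2]].
      assert (H : forall y : {y | M1 y \/ M2 y}, ~ M1 (proj1_sig y) -> M2 (proj1_sig y)).
      { intros [y [H|H]] Hn; simpl in *; [contradiction|auto]. }
      exists (fun y => match emi (M1 (proj1_sig y)) with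
                       | left h => inl (exist M1 _ h) | right h => inr (exist M2 _ (H y h)) end).
      intros y1 y2; destruct (emi (M1 (proj1_sig y1))); destruct (emi (M1 (proj1_sig y2)));
        intros E; try discriminate; injection E; intros E'; apply sig_ext; auto. }
    destruct (realq_exists L C K X HnK Hsat HX q Hq _ HM12) as [c' Hc'].
    assert (E1 : equiv_over L C X M1 a c').
    { apply (realq_equiv L C X q Hq); auto. apply (realq_mono L C X q (fun y => M1 y \/ M2 y) M1 c'); auto. }
    assert (E2 : equiv_over L C X M2 c' b).
    { apply (realq_equiv L C X q Hq); auto. apply (realq_mono L C X q (fun y => M1 y \/ M2 y) M2 c'); auto. }
    split.
    - assert (HI1 : small K (X + {y | M1 y})) by (apply small_sum; auto; apply HM1).
      assert (HI2 : small K (X + {y | M2 y})) by (apply small_sum; auto; apply HM2).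
      destruct (Hhom _ HI1 (env_over L C X M1 a) (env_over L C X M1 c') E1) as [g1 [Hg1 Hg1e]].
      destruct (Hhom _ HI2 (env_over L C X M2 c') (env_over L C X M2 b) E2) as [g2 [Hg2 Hg2e]].
      exists (fun x => g2 (g1 x)); split.
      + exists (g2 :: g1 :: nil); split; [|reflexivity].
        constructor; [|constructor; [|constructor]]; split; auto.
        * exists M2; split; auto. intros y Hy; apply (Hg2e (inr (exist _ y Hy))).
        * exists M1; split; auto. intros y Hy; apply (Hg1e (inr (exist _ y Hy))).
      + intros x. assert (H1 := Hg1e (inl x)); assert (H2 := Hg2e (inl x)); simpl in *. rewrite H1; exact H2.
    - exists 2; split; auto.
      exists (fun i => match i with 0 => a | 1 => c' | _ => b end); split; [|split]; auto.
      intros i Hi. destruct i as [|[|i]]; [exists M1|exists M2|lia]; split; auto. }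
  split; [exact Part1|].
  intros HTA.
  assert (Part2a : forall (X : Type), small K X ->
        forall a b : X -> C, same_type L C X a b -> lascar_equiv L C X K a b).
  { intros X HX a b Hab.
    set (p := fun phi => sat L C phi a).
    assert (Hp : complete_type_empty L C X p).
    { split.
      - intros l Hl; exists a; auto.
      - intros phi; destruct (classic (sat L C phi a)); [left|right]; auto. }
    apply (Part1 X HX p Hp (HTA X HX p Hp) a b); intros phi H; [auto|apply Hab; auto]. }
  split; [exact Part2a|].
  intros s Hs.
  destruct (classic (inhabited C)) as [[c0]|HnC].
  2:{ exists nil; split; auto. intros x; exfalso; apply HnC; constructor; auto. }
  destruct (exists_small_model L C K HK c0) as [M0 HM0].
  destruct (proj1 Hs) as [si [Hs1 Hs2]].
  destruct (Part2a {x | M0 x} (proj1 HM0) (fun m => proj1_sig m) (fun m => s (proj1_sig m))) as [f [[l [Hl Hfl]] Hf]].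
  { intros phi; apply (sat_aut L C s si Hs Hs2 Hs1). }
  assert (Hfa : automorphism L C f).
  { replace f with (foldc l); [apply (fold_aut L C l K Hl)|]. apply functional_extensionality; intros; symmetry; apply Hfl. }
  destruct (proj1 Hfa) as [fi [Hf1 Hf2]].
  set (g := fun x => fi (s x)).
  assert (Hg : automorphism L C g) by (unfold g; apply aut_comp; auto; apply (aut_inv L C f fi); auto).
  exists (l ++ g :: nil); split.
  - apply Forall_app; split; auto. constructor; auto. split; auto.
    exists M0; split; auto. intros y Hy. unfold g. assert (H := Hf (exist _ y Hy)); simpl in H. rewrite <- H; apply Hf2.
  - intros x.
    assert (Hfold : forall (l0 : list (C -> C)) (h0 : C -> C) (y : C),
                     fold_right (fun (g h : C -> C) => fun y => g (h y)) h0 l0 y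
                     = fold_right (fun (g h : C -> C) => fun y => g (h y)) (fun y => y) l0 (h0 y)).
    { induction l0 as [|g0 l0 IH]; intros; simpl; auto; rewrite IH; auto. }
    rewrite fold_right_app. simpl. rewrite Hfold, <- Hfl. unfold g; rewrite Hf1; auto.
Qed.
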